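(* Let $\mathcal{X}$ be a finite set, $\pi$ a probability mass function on $\mathcal{X}$ with full support, and $P$ a $\pi$-stationary transition matrix on $\mathcal{X}$. Let a group $\mathcal{G}$ act on $\mathcal{X}$ with orbits $\mathcal{O}_1,\dots,\mathcal{O}_k$, and let $G$ be the associated Gibbs orbit kernel. Then the projection chains of $GPG$ and of $P$ induced by the partition $(\mathcal{O}_i)_{i=1}^k$ coincide: $\overline{GPG}=\overline{P}$.
   Context: The Gibbs orbit kernel is $G(x,y)=\pi(y)/\pi(\mathcal{O}(x))$ if $y$ lies in the orbit $\mathcal{O}(x)$ of $x$, and $0$ otherwise, where $\pi(A)=\sum_{z\in A}\pi(z)$. For a transition matrix $K$ on $\mathcal{X}$, its projection chain induced by $(\mathcal{O}_i)_{i=1}^k$ is the $k\times k$ matrix $\overline{K}(i,j)=\frac{1}{\pi(\mathcal{O}_i)}\sum_{x\in\mathcal{O}_i,\,y\in\mathcal{O}_j}\pi(x)K(x,y)$. *)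

(* Defs.v *)
From HB Require Import structures.
From mathcomp Require Import all_boot all_order all_algebra all_fingroup.
Set Implicit Arguments. Unset Strict Implicit. Unset Printing Implicit Defensive.
Import Order.TTheory GRing.Theory Num.Theory.
Local Open Scope ring_scope.

Definition massOf (R : realFieldType) (X : finType) (pi : X -> R) (A : {set X}) : R :=
  \sum_(z in A) pi z.

Definition full_pmf (R : realFieldType) (X : finType) (pi : X -> R) : Prop :=
  (forall x, 0 < pi x) /\ \sum_(x : X) pi x = 1.

Definition stochastic (R : realFieldType) (X : finType) (K : X -> X -> R) : Prop :=
  (forall x y, 0 <= K x y) /\ (forall x, \sum_(y : X) K x y = 1).

Definition stationary (R : realFieldType) (X : finType) (pi : X -> R)
  (K : X -> X -> R) : Prop :=
  forall y, \sum_(x : X) pi x * K x y = pi y.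

Definition kcomp (R : realFieldType) (X : finType) (K L : X -> X -> R) : X -> X -> R :=
  fun x z => \sum_(y : X) K x y * L y z.

Definition gorbit (gT : finGroupType) (X : finType) (to : {action gT &-> X}) (x : X)
  : {set X} := orbit to [set: gT] x.

Definition orbits_of (gT : finGroupType) (X : finType) (to : {action gT &-> X})
  : {set {set X}} := [set gorbit to x | x : X].

Definition gibbs_orbit_kernel (R : realFieldType) (gT : finGroupType) (X : finType)
  (to : {action gT &-> X}) (pi : X -> R) : X -> X -> R :=
  fun x y => if y \in gorbit to x then pi y / massOf pi (gorbit to x) else 0.

Definition proj_chain (R : realFieldType) (X : finType) (pi : X -> R)
  (K : X -> X -> R) (Oi Oj : {set X}) : R :=
  (massOf pi Oi)^-1 * \sum_(x in Oi) \sum_(y in Oj) pi x * K x y.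

(* Main.v *)
Require Import Defs.
From HB Require Import structures.
From mathcomp Require Import all_boot all_order all_algebra all_fingroup.
Import Order.TTheory GRing.Theory Num.Theory.
Local Open Scope ring_scope.
Set Implicit Arguments.

Lemma orbit_same (gT : finGroupType) (X : finType) (to : {action gT &-> X})
  (O : {set X}) x : O \in orbits_of to -> x \in O -> gorbit to x = O.
Proof.
case/imsetP => z _ -> Hx; rewrite /gorbit; exact/orbit_eqP.
Qed.

Lemma mass_neq0 (R : realFieldType) (X : finType) (gT : finGroupType)
  (to : {action gT &-> X}) (pi : X -> R) (O : {set X}) :
  full_pmf pi -> O \in orbits_of to -> massOf pi O != 0.
Proof.
case=> Hp _ /imsetP [z _ ->]; rewrite /massOf.
rewrite (bigD1 z) ?orbit_refl //=; apply: lt0r_neq0.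
apply: (lt_le_trans (Hp z)); rewrite lerDl.
by apply: sumr_ge0 => i _; exact: ltW.
Qed.

Lemma sumA (R : realFieldType) (X : finType) (gT : finGroupType)
  (to : {action gT &-> X}) (pi : X -> R) (O : {set X}) u :
  full_pmf pi -> O \in orbits_of to ->
  \sum_(x in O) pi x * gibbs_orbit_kernel to pi x u = if u \in O then pi u else 0.
Proof.
move=> Hf HO.
rewrite (eq_bigr (fun x => pi x * (if u \in O then pi u / massOf pi O else 0))); last first.
  by move=> x Hx; rewrite /gibbs_orbit_kernel (orbit_same HO Hx).
case: ifP => Hu; last by rewrite big1 // => x _; rewrite mulr0.
rewrite -big_distrl /= -/(massOf pi O) mulrC -mulrA mulVf ?mulr1 //.
exact: mass_neq0 HO.
Qed.

Lemma sumB (R : realFieldType) (X : finType) (gT : finGroupType)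
  (to : {action gT &-> X}) (pi : X -> R) (O : {set X}) v :
  full_pmf pi -> O \in orbits_of to ->
  \sum_(y in O) gibbs_orbit_kernel to pi v y = if v \in O then 1 else 0.
Proof.
move=> Hf HO.
case: ifP => Hv.
  rewrite (eq_bigr (fun y => pi y / massOf pi O)); last first.
    by move=> y Hy; rewrite /gibbs_orbit_kernel (orbit_same HO Hv) Hy.
  rewrite -big_distrl /= -/(massOf pi O) mulfV //; exact: mass_neq0 HO.
rewrite big1 // => y Hy; rewrite /gibbs_orbit_kernel; case: ifP => // Hyv.
have E1 : gorbit to y = gorbit to v by rewrite /gorbit; apply/orbit_eqP.
have E2 := orbit_same HO Hy.
move: Hv; rewrite -E2 E1 /gorbit orbit_refl //.
Qed.

Unset Implicit Arguments.

Theorem proposition2p4 (R : realFieldType) (X : finType) (gT : finGroupType)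
  (to : {action gT &-> X}) (pi : X -> R) (P : X -> X -> R) :
  full_pmf pi -> stochastic P -> stationary pi P ->
  forall Oi Oj : {set X}, Oi \in orbits_of to -> Oj \in orbits_of to ->
  proj_chain pi (kcomp (kcomp (gibbs_orbit_kernel to pi) P) (gibbs_orbit_kernel to pi))
    Oi Oj
  = proj_chain pi P Oi Oj.
Proof.
move=> Hf _ _ Oi Oj Hi Hj; rewrite /proj_chain; congr (_ * _).
set G := gibbs_orbit_kernel to pi.
transitivity (\sum_u \sum_v (\sum_(x in Oi) pi x * G x u) * P u v * (\sum_(y in Oj) G v y)).
  rewrite /kcomp.
  transitivity (\sum_(x in Oi) \sum_(y in Oj) \sum_u \sum_v pi x * G x u * P u v * G v y).
    apply: eq_bigr => x _. apply eq_bigr; intros y _.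
    rewrite mulr_sumr; under eq_bigr => v _ do rewrite big_distrl /= mulr_sumr.
    rewrite exchange_big /=; apply: eq_bigr => u _; apply: eq_bigr => v _.
    by rewrite !mulrA.
  under eq_bigr => x _ do rewrite exchange_big /=.
  rewrite exchange_big /=.
  under eq_bigr => u _ do under eq_bigr => x _ do rewrite exchange_big /=.
  under eq_bigr => u _ do rewrite exchange_big /=.
  apply eq_bigr; intros u _; apply eq_bigr; intros v _.
  rewrite big_distrl big_distrl /=; apply eq_bigr; intros x _.
  rewrite mulr_sumr; apply eq_bigr; intros y _.
  by rewrite ?mulrA.
under eq_bigr => u _ do under eq_bigr => v _ do rewrite (sumA _ Hf Hi) (sumB _ Hf Hj).
rewrite [RHS]big_mkcond /=; apply eq_bigr; intros u _.
case: ifP => Hu; last by rewrite big1 // => v _; rewrite !mul0r.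
rewrite [RHS]big_mkcond /=; apply eq_bigr; intros v _.
by case: ifP; rewrite ?mulr1 ?mulr0.
Qed.
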